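(* Consider the one-stage ANC game described in the context, at a given initial pair $(x,s)$. Suppose that for every $x\in\mathbb{R}^n$, $a\in\mathcal{A}$ the functions $u\mapsto\Sigma(F(x,0),u,a)$ and $u\mapsto\Sigma(F(x,u),u,a)$ are continuous, coercive and convex on $\mathbb{R}^m$. Suppose further that there is a reserved action $a_\circ\in\mathcal{A}$, $a_\circ\ne1$, such that for any $j,k\in\mathcal{A}\setminus\{a_\circ\}$ with $j<k$ one has $h^{x,s}_j(u)>h^{x,s}_k(u)$ for all $u\in\mathring{U}(x)$. Suppose that there exists $u^*=u^*(x,s)\in\mathring{U}(x)$ such that (a) $h^{x,s}_1(u^* )=h^{x,s}_{a_\circ}(u^* )$; (b) for all $u\ne u^*$, $h^{x,s}_1(u)>h^{x,s}_1(u^* )$ or $h^{x,s}_{a_\circ}(u)>h^{x,s}_{a_\circ}(u^* )$; (c) $u^*$ is not a minimum of $h^{x,s}_1(\cdot)$ nor of $h^{x,s}_{a_\circ}(\cdot)$. Then the game admits a non-pure saddle point $(u^*,p^* )$ with $p^*$ supported on $\{1,a_\circ\}$.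
   Context: Setting (one-stage ANC game). Let $\mathcal{F}=\{1,\dots,|\mathcal{F}|\}$ be a finite set of regimes and $\mathcal{A}=\{1,\dots,N\}$ a finite set of jammer actions; for each $a$ let $P(a)$ be an $|\mathcal{F}|\times|\mathcal{F}|$ row-stochastic matrix; $q\in[0,1]^{|\mathcal{F}|}$. Let $F:\mathbb{R}^n\times\mathbb{R}^m\to\mathbb{R}^n$, $\sigma^0,\sigma^1,g^0$ real-valued on $\mathbb{R}^n\times\mathbb{R}^m$, $\mathbb{R}^n$, $\mathcal{A}\times\mathcal{F}$ respectively. For plant state $x$ and regime $s$, the controller chooses $u\in\mathbb{R}^m$, the jammer chooses $p\in\mathcal{S}_{N-1}$ (unit simplex in $\mathbb{R}^N$); $a\sim p$, $\mathrm{Pr}(s^+=i)=P_{si}(a)$, $\mathrm{Pr}(b=1\mid s^+)=q_{s^+}$, $x^+=F(x,bu)$; payoff $\Sigma(x^+,u,a)=\sigma^0(x,u)+\sigma^1(x^+)-g^0(a,s)$ with expectation $p'h^{x,s}(u)$, $h^{x,s}_i(u)=(P(i)q)_s\Sigma(F(x,u),u,i)+(1-(P(i)q)_s)\Sigma(F(x,0),u,i)$. $J_1=\inf_{u}\sup_pp'h^{x,s}(u)$, $J_2=\sup_p\inf_up'h^{x,s}(u)$. $U(x)\subset\mathbb{R}^m$ is a compact set containing the controller's optimal response and satisfying $J_1=\inf_{u\in U(x)}\sup_pp'h^{x,s}(u)=\sup_p\inf_{u\in U(x)}p'h^{x,s}(u)=J_2$ (such a set exists under the stated continuity/coercivity/convexity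 assumption); $\mathring{U}(x)$ is its interior. A saddle point is $(u^*,p^* )$ with $p'h^{x,s}(u^* )\le(p^* )'h^{x,s}(u^* )\le(p^* )'h^{x,s}(u)$ for all $u,p$; non-pure means $p^*$ has at least two positive components; supported on a set means zero outside it. Coercive: $h(u)\ge\eta(\|u\|)$ with $\eta(y)\to+\infty$. *)

(* Defs.v *)
From HB Require Import structures.
From mathcomp Require Import all_boot all_order all_algebra.
From mathcomp Require Import all_classical all_reals all_analysis.
Set Implicit Arguments. Unset Strict Implicit. Unset Printing Implicit Defensive.
Import Order.TTheory GRing.Theory Num.Theory.
Import numFieldNormedType.Exports.
Local Open Scope classical_set_scope.
Local Open Scope ring_scope.

Section ANC.
Variable R : realType.

(* Jammer actions are 'I_N.+1; the paper's action 1 is ord0, action k is k-1. *)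

Definition simplex N : set ('I_N.+1 -> R) :=
  [set p | (forall i, 0 <= p i) /\ \sum_(i < N.+1) p i = 1].
Arguments simplex N : clear implicits.

Definition Sigma (n m N S : nat) (sigma0 : 'rV[R]_n -> 'rV[R]_m -> R)
  (sigma1 : 'rV[R]_n -> R) (g0 : 'I_N.+1 -> 'I_S -> R)
  (x : 'rV[R]_n) (s : 'I_S) (xp : 'rV[R]_n) (u : 'rV[R]_m) (a : 'I_N.+1) : R :=
  sigma0 x u + sigma1 xp - g0 a s.

Definition hfun (n m N S : nat) (F : 'rV[R]_n -> 'rV[R]_m -> 'rV[R]_n)
  (sigma0 : 'rV[R]_n -> 'rV[R]_m -> R) (sigma1 : 'rV[R]_n -> R)
  (g0 : 'I_N.+1 -> 'I_S -> R) (P : 'I_N.+1 -> 'M[R]_S) (q : 'cV[R]_S)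
  (x : 'rV[R]_n) (s : 'I_S) (i : 'I_N.+1) (u : 'rV[R]_m) : R :=
  let c := (P i *m q) s ord0 in
  c * Sigma sigma0 sigma1 g0 x s (F x u) u i
  + (1 - c) * Sigma sigma0 sigma1 g0 x s (F x 0) u i.

Definition pdot (m N : nat) (h : 'I_N.+1 -> 'rV[R]_m -> R)
  (p : 'I_N.+1 -> R) (u : 'rV[R]_m) : R := \sum_(i < N.+1) p i * h i u.

Definition convex_fun (m : nat) (f : 'rV[R]_m -> R) : Prop :=
  forall (u v : 'rV[R]_m) (t : R), 0 <= t <= 1 ->
    f (t *: u + (1 - t) *: v) <= t * f u + (1 - t) * f v.

Definition coercive (m : nat) (f : 'rV[R]_m -> R) : Prop :=
  exists eta : R -> R, eta @ +oo --> +oo /\ forall u, eta `|u| <= f u.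

Definition supP (m N : nat) (h : 'I_N.+1 -> 'rV[R]_m -> R) (u : 'rV[R]_m)
  : \bar R := ereal_sup [set (pdot h p u)%:E | p in simplex N].

Definition infU (m N : nat) (h : 'I_N.+1 -> 'rV[R]_m -> R)
  (D : set 'rV[R]_m) (p : 'I_N.+1 -> R) : \bar R :=
  ereal_inf [set (pdot h p u)%:E | u in D].

Definition upper_value (m N : nat) (h : 'I_N.+1 -> 'rV[R]_m -> R)
  (D : set 'rV[R]_m) : \bar R := ereal_inf (supP h @` D).

Definition lower_value (m N : nat) (h : 'I_N.+1 -> 'rV[R]_m -> R)
  (D : set 'rV[R]_m) : \bar R := ereal_sup (infU h D @` simplex N).

Definition saddle_point (m N : nat) (h : 'I_N.+1 -> 'rV[R]_m -> R)
  (us : 'rV[R]_m) (ps : 'I_N.+1 -> R) : Prop :=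
  simplex N ps /\
  (forall p, simplex N p -> pdot h p us <= pdot h ps us) /\
  (forall u, pdot h ps us <= pdot h ps u).

Definition non_pure (N : nat) (p : 'I_N.+1 -> R) : Prop :=
  exists i j, i != j /\ 0 < p i /\ 0 < p j.

Definition supported_on (N : nat) (p : 'I_N.+1 -> R) (A : set 'I_N.+1) : Prop :=
  forall i, ~ A i -> p i = 0.

End ANC.
Arguments simplex {R} N.

(* Main.v *)
Require Import Defs.
From HB Require Import structures.
From mathcomp Require Import all_boot all_order all_algebra.
From mathcomp Require Import all_classical all_reals all_analysis.
From mathcomp Require Import ring lra.
Import Order.TTheory GRing.Theory Num.Theory.
Import numFieldNormedType.Exports.
Local Open Scope classical_set_scope.
Local Open Scope ring_scope.

Section H.
Variable R : realType.
Variable m : nat.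

Lemma conv_comb (f g : 'rV[R]_m -> R) c : 0 <= c <= 1 ->
  convex_fun f -> convex_fun g -> convex_fun (fun u => c * f u + (1-c) * g u).
Proof.
move=> /andP[c0 c1] cf cg u w t tb.
have := cf u w t tb; have := cg u w t tb => Hg Hf.
have c1' : 0 <= 1 - c by rewrite subr_ge0.
apply: (le_trans (lerD (ler_wpM2l c0 Hf) (ler_wpM2l c1' Hg))).
by rewrite le_eqVlt; apply/orP; left; apply/eqP; ring.
Qed.

Lemma key (f g : 'rV[R]_m -> R) us v uA uB :
  convex_fun f -> convex_fun g -> f us = v -> g us = v ->
  (forall u, u != us -> f u > f us \/ g u > g us) ->
  f uA < v -> g uB < v ->
  (v - g uB) * (v - f uA) <= (g uA - v) * (f uB - v).
Proof.
move=> cf cg fv gv hb fA gB.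
have gA : g uA > v.
  case: (hb uA); first by apply/eqP => E; move: fA; rewrite E fv ltxx.
  by rewrite fv => /ltW; rewrite leNgt fA.
  by rewrite gv.
have fB : f uB > v.
  case: (hb uB); first by apply/eqP => E; move: gB; rewrite E gv ltxx.
  by rewrite fv.
  by rewrite gv => /ltW; rewrite leNgt gB.
rewrite leNgt; apply/negP => H.
set a1 := f uA - v; set a2 := g uA - v; set b1 := f uB - v; set b2 := g uB - v.
have hd : 0 < b1 - a1 by rewrite /a1 /b1; lra.
set th := b1 / (b1 - a1).
have thd : th * (b1 - a1) = b1 by rewrite /th divfK // gt_eqF.
have th0 : 0 <= th by rewrite /th divr_ge0 // ?ltW // /b1; lra.
have th1 : th <= 1 by rewrite /th ler_pdivrMr // mul1r /a1; lra.
have thb : 0 <= th <= 1 by rewrite th0 th1.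
set w := th *: uA + (1 - th) *: uB.
have Hf := cf uA uB th thb; have Hg := cg uA uB th thb.
have e1 : th * f uA + (1 - th) * f uB = v + (b1 - th * (b1 - a1)).
  by rewrite /a1 /b1; ring.
have e2 : (th * g uA + (1 - th) * g uB - v) * (b1 - a1) = (th * (b1 - a1)) * a2 + ((b1 - a1) - th * (b1 - a1)) * b2.
  by rewrite /a2 /b2; ring.
rewrite thd in e1 e2.
have e2' : (th * g uA + (1 - th) * g uB - v) * (b1 - a1) < 0.
  rewrite e2. move: H; rewrite /a1 /a2 /b1 /b2. lra.
have glt : th * g uA + (1 - th) * g uB < v.
  by move: e2'; rewrite pmulr_llt0 // subr_lt0.
have fw : f w <= v by move: Hf; rewrite e1 subrr addr0.
have gw : g w < v by exact: (le_lt_trans Hg glt).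
have wne : w != us by apply/eqP => E; move: gw; rewrite E gv ltxx.
case: (hb w wne); rewrite ?fv ?gv => C.
  by move: fw; rewrite leNgt C.
by move: gw; rewrite ltNge (ltW C).
Qed.
Lemma sum_two (N : nat) (a0 : 'I_N.+1) (t : R) (f : 'I_N.+1 -> R) :
  a0 != ord0 ->
  \sum_(i < N.+1) (if i == ord0 then t else if i == a0 then 1 - t else 0) * f i
  = t * f ord0 + (1 - t) * f a0.
Proof.
move=> ha.
rewrite (bigD1 ord0) //= (bigD1 a0) /=; last by rewrite ha.

rewrite (negbTE ha) eqxx big1 ?addr0 //.
by move=> i /andP[/negbTE -> /negbTE ->]; rewrite mul0r.
Qed.
End H.

Lemma cbound (R : realType) (N S : nat) (P : 'I_N.+1 -> 'M[R]_S) (q : 'cV[R]_S) s i :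
  (forall a i j, 0 <= P a i j) ->
  (forall a i, \sum_(j < S) P a i j = 1) ->
  (forall i, 0 <= q i ord0 <= 1) ->
  0 <= (P i *m q) s ord0 <= 1.
Proof.
move=> P0 P1 q01; rewrite mxE; apply/andP; split.
  by apply: sumr_ge0 => j _; rewrite mulr_ge0 // (andP (q01 j)).1.
rewrite -(P1 i s); apply: ler_sum => j _.
by rewrite ler_piMr // (andP (q01 j)).2.
Qed.

Theorem corollary1 (R : realType) (n m N S : nat)
  (F : 'rV[R]_n -> 'rV[R]_m -> 'rV[R]_n)
  (sigma0 : 'rV[R]_n -> 'rV[R]_m -> R) (sigma1 : 'rV[R]_n -> R)
  (g0 : 'I_N.+1 -> 'I_S -> R) (P : 'I_N.+1 -> 'M[R]_S) (q : 'cV[R]_S)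
  (x : 'rV[R]_n) (s : 'I_S) (U : set 'rV[R]_m) (a0 : 'I_N.+1) (us : 'rV[R]_m) :
  (* P(a) row-stochastic, q in [0,1]^|F| *)
  (forall a i j, 0 <= P a i j) ->
  (forall a i, \sum_(j < S) P a i j = 1) ->
  (forall i, 0 <= q i ord0 <= 1) ->
  (* continuity, coercivity, convexity in u *)
  (forall (y : 'rV[R]_n) (a : 'I_N.+1),
     let f0 := fun u => Sigma sigma0 sigma1 g0 y s (F y 0) u a in
     let f1 := fun u => Sigma sigma0 sigma1 g0 y s (F y u) u a in
     (continuous f0 /\ coercive f0 /\ convex_fun f0) /\
     (continuous f1 /\ coercive f1 /\ convex_fun f1)) ->
  let h := hfun F sigma0 sigma1 g0 P q x s in
  (* U = U(x): compact, contains the controller's optimal responses,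
     and the min-max values over U coincide with J1 and J2 *)
  compact U ->
  (forall u, supP h u = upper_value h setT -> U u) ->
  upper_value h setT = upper_value h U ->
  upper_value h U = lower_value h U ->
  lower_value h U = lower_value h setT ->
  (* reserved action a0 <> 1 *)
  a0 != ord0 ->
  (forall j k : 'I_N.+1, j != a0 -> k != a0 -> (j < k)%N ->
     forall u, interior U u -> h j u > h k u) ->
  interior U us ->
  h ord0 us = h a0 us ->
  (forall u, u != us -> h ord0 u > h ord0 us \/ h a0 u > h a0 us) ->
  ~ (forall u, h ord0 us <= h ord0 u) ->
  ~ (forall u, h a0 us <= h a0 u) ->
  exists ps : 'I_N.+1 -> R,
    saddle_point h us ps /\ non_pure ps /\ supported_on ps [set ord0; a0].
Proof.
move=> P0 P1 q01 Hcv h cU Uopt e1 e2 e3 ha0 Hord Hus Heq Hb Hc0 Hca.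
have hconv : forall i, convex_fun (h i).
  move=> i; have [[_ [_ c0]] [_ [_ c1]]] := Hcv x i.
  move: c0 c1; rewrite /h /hfun /= => c0 c1.
  have cb := @cbound R N S P q s i P0 P1 q01.
  exact: (@conv_comb R m _ _ _ cb c1 c0).
set v := h ord0 us.
have gv : h a0 us = v by rewrite -Heq.
have fpos : forall u, h a0 u < v -> h ord0 u > v.
  move=> u gu; case: (Hb u).
  - by apply/eqP => E; move: gu; rewrite E gv ltxx.
  - by [].
  - by rewrite gv => /ltW; rewrite leNgt gu.
have [uA /negP] := (existsNP _).2 Hc0; rewrite -ltNge => hA.
have [uB /negP] := (existsNP _).2 Hca; rewrite -ltNge => hB; rewrite gv in hB.
set E := [set r | exists u, h a0 u < v /\ r = (v - h a0 u) / (h ord0 u - v)].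
have Ebound : forall u, h ord0 u < v -> forall r, E r -> r <= (h a0 u - v) / (v - h ord0 u).
  move=> u fu r [w [gw ->]].
  have fw := fpos w gw.
  rewrite ler_pdivrMr ?subr_gt0 // mulrAC ler_pdivlMr ?subr_gt0 //.
  exact: (@key R m _ _ _ _ _ _ (hconv ord0) (hconv a0) (erefl _) gv Hb fu gw).
have Ene : E !=set0 by exists ((v - h a0 uB) / (h ord0 uB - v)); exists uB.
have Eub : has_ubound E by exists ((h a0 uA - v) / (v - h ord0 uA)); exact: Ebound.
set lam := sup E.
have lamub : forall r, E r -> r <= lam := ub_le_sup Eub.
have lam_le : forall u, h ord0 u < v -> lam <= (h a0 u - v) / (v - h ord0 u).
  by move=> u fu; apply: ge_sup Ene (Ebound u fu).
have lam0 : 0 < lam.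
  apply: (lt_le_trans _ (lamub _ (ex_intro _ uB (conj hB (erefl _))))).
  by rewrite divr_gt0 // subr_gt0 // fpos.
set t := lam / (1 + lam).
have tl : t * (1 + lam) = lam by rewrite /t divfK // gt_eqF // ltr_pwDr.
have t0 : 0 < t by nra.
have t1 : 0 < 1 - t by nra.
pose ps := fun i : 'I_N.+1 => if i == ord0 then t else if i == a0 then 1 - t else 0.
have pd : forall u, pdot h ps u = t * h ord0 u + (1 - t) * h a0 u.
  by move=> u; rewrite /pdot (@sum_two R).
exists ps; split; [split; [|split] | split].
- split.
    by move=> i; rewrite /ps; case: ifP => _; [exact: ltW|case: ifP => _ //; exact: ltW].
  rewrite (eq_bigr (fun i => ps i * 1)); last by move=> i _; rewrite mulr1.
  by rewrite (@sum_two R) // !mulr1 subrKC.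
- move=> p [p0 p1]; rewrite pd gv -/v.
  have -> : t * v + (1 - t) * v = \sum_(i < N.+1) p i * v by rewrite -mulr_suml p1; ring.
  apply: ler_sum => i _; apply: ler_wpM2l => //.
  have [->|hi0] := eqVneq i ord0; first by [].
  have [->|hia] := eqVneq i a0; first by rewrite gv.
  apply: ltW; apply: Hord => //; first by rewrite eq_sym.
  by rewrite lt0n; apply: contra hi0 => /eqP e; apply/eqP/val_inj.
- move=> u; rewrite !pd gv -/v.
  have K : 0 <= lam * (h ord0 u - v) + (h a0 u - v).
    have [fu|fu] := ltP (h ord0 u) v.
      have := lam_le u fu; rewrite ler_pdivlMr ?subr_gt0 //; lra.
    have [gu|gu] := ltP (h a0 u) v.
      have fu' := fpos u gu.
      have := lamub _ (ex_intro _ u (conj gu (erefl _))).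
      rewrite ler_pdivrMr ?subr_gt0 //; lra.
    nra.
  rewrite -subr_ge0.
  have -> : t * h ord0 u + (1 - t) * h a0 u - (t * v + (1 - t) * v) =
     ((t * (1 + lam)) * (h ord0 u - v) + ((1 + lam) - t * (1 + lam)) * (h a0 u - v)) / (1 + lam).
    have hne : 1 + lam != 0 by rewrite gt_eqF // ltr_pwDr.
    by apply: (mulIf hne); rewrite divfK //; ring.
  rewrite tl addrK mul1r divr_ge0 //.
  by rewrite ltW // ltr_pwDr.
- exists ord0, a0; split; first by rewrite eq_sym.
  by rewrite /ps eqxx (negbTE ha0) eqxx.
- move=> i Hi; rewrite /ps.
  have [e|_] := eqVneq i ord0; first by exfalso; apply: Hi; left.
  have [e|_] := eqVneq i a0 => //; by exfalso; apply: Hi; right.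
Qed.
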